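(* Let $\mathcal{X}$ be a set, $\mathcal{D}$ a distribution on $\mathcal{X}\times[0,1]^N$, $f,f^\star:\mathcal{X}\to[0,1]^N$ two functions, $q:\mathcal{X}\times[0,1]^N\to\Delta(\mathcal{S})$ a stochastic policy and $\pi:\mathcal{X}\times[0,1]^N\to\mathcal{S}$ a deterministic policy. Then $$\Big|\mathbb{E}_{(x,r)\sim\mathcal{D}}\big[R(\pi(x,r),f(x),r)\big]-\mathbb{E}_{(x,r)\sim\mathcal{D}}\big[R(\pi(x,r),f^\star(x),r)\big]\Big|\le\sqrt{V(q,\pi)}\cdot\sqrt{\mathbb{E}_{(x,r)\sim\mathcal{D},\,S\sim q(x,r)}\Big[\sum_{i\in S}(f_i(x)-f_i^\star(x))^2\Big]}.$$
   Context: $N\ge K\ge1$ are integers and $\mathcal{S}$ is the collection of subsets $S\subseteq[N]$ with $1\le|S|\le K$; $\Delta(\mathcal{S})$ is the set of probability distributions on $\mathcal{S}$. For $S\in\mathcal{S}$, $v\in[0,1]^N$, $r\in[0,1]^N$, $R(S,v,r)=\frac{\sum_{i\in S}r_iv_i}{1+\sum_{i\in S}v_i}$. For $\rho\in\Delta(\mathcal{S})$, $w_i(\rho)=\sum_{S\in\mathcal{S}:\,i\in S}\rho(S)$. The dispersion is $V(q,\pi)=\mathbb{E}_{(x,r)\sim\mathcal{D}}\big[\sum_{i\in\pi(x,r)}\frac{1}{w_i(q(x,r))}\big]$ (with $1/0=+\infty$). *)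

(* Defs.v *)
From HB Require Import structures.
From mathcomp Require Import all_boot all_order all_algebra.
From mathcomp Require Import all_classical all_reals all_analysis.
Set Implicit Arguments. Unset Strict Implicit. Unset Printing Implicit Defensive.
Import Order.TTheory GRing.Theory Num.Theory.
Local Open Scope classical_set_scope.
Local Open Scope ring_scope.

Definition validS (N K : nat) (S : {set 'I_N}) : bool := (1 <= #|S| <= K)%N.

(* rho ∈ Δ(𝒮): a probability distribution on {set 'I_N} supported on 𝒮. *)
Definition is_distS (R : realType) (N K : nat) (rho : {ffun {set 'I_N} -> R}) : Prop :=
  (forall S, 0 <= rho S) /\ (forall S, ~~ validS K S -> rho S = 0) /\
  \sum_(S : {set 'I_N}) rho S = 1.

Definition Rev (R : realType) (N : nat) (S : {set 'I_N}) (v r : 'I_N -> R) : R :=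
  (\sum_(i in S) r i * v i) / (1 + \sum_(i in S) v i).

Definition wgt (R : realType) (N : nat) (rho : {ffun {set 'I_N} -> R}) (i : 'I_N) : R :=
  \sum_(S : {set 'I_N} | i \in S) rho S.

Definition inv_oo (R : realType) (x : R) : \bar R :=
  if x == 0 then +oo%E else (x^-1)%:E.

Definition dispersion (R : realType) d (X : measurableType d) (N : nat)
  (D : probability (X * N.-tuple R)%type R)
  (q : X * N.-tuple R -> {ffun {set 'I_N} -> R}) (pi : X * N.-tuple R -> {set 'I_N}) : \bar R :=
  (\int[D]_z (\sum_(i in pi z) inv_oo (wgt (q z) i)))%E.

(* Main.v *)
Require Import Defs.
From HB Require Import structures.
From mathcomp Require Import all_boot all_order all_algebra.
From mathcomp Require Import all_classical all_reals all_analysis.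
From mathcomp Require Import measurable_realfun.
From mathcomp Require Import ring lra.
Import Order.TTheory GRing.Theory Num.Theory.
Import numFieldTopology.Exports numFieldNormedType.Exports.
Local Open Scope classical_set_scope.
Local Open Scope ring_scope.

Module Helpers.
Set Implicit Arguments. Unset Strict Implicit.

Section alg.
Variable R : realType.

Lemma sum_mulB (I : finType) (S : {set I}) (x r : I -> R) (y : R) :
  \sum_(i in S) x i * (r i - y) = \sum_(i in S) r i * x i - y * \sum_(i in S) x i.
Proof.
rewrite mulr_sumr -sumrB; apply: eq_bigr => i _; ring.
Qed.

Lemma Rev_bound (N : nat) (S : {set 'I_N}) (v r : 'I_N -> R) :
  (forall i, 0 <= v i) -> (forall i, 0 <= r i <= 1) ->
  0 <= \sum_(i in S) r i * v i <= \sum_(i in S) v i.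
Proof.
move=> hv hr; apply/andP; split.
  by apply: sumr_ge0 => i _; have /andP[? ?] := hr i; apply: mulr_ge0.
apply: ler_sum => i _; have /andP[? ?] := hr i; exact: ler_piMl.
Qed.

Lemma Rev_norm_le1 (N : nat) (S : {set 'I_N}) (v r : 'I_N -> R) :
  (forall i, 0 <= v i) -> (forall i, 0 <= r i <= 1) ->
  `|Rev S v r| <= 1.
Proof.
move=> hv hr; rewrite /Rev.
have /andP[hA hAB] := Rev_bound S hv hr.
have hB : 0 <= \sum_(i in S) v i by apply: sumr_ge0.
rewrite ger0_norm ?divr_ge0 ?addr_ge0 //.
by rewrite ler_pdivrMr ?mul1r; [lra | lra].
Qed.

Lemma Rev_lip (N : nat) (S : {set 'I_N}) (v v' r : 'I_N -> R) :
  (forall i, 0 <= v i) -> (forall i, 0 <= v' i) -> (forall i, 0 <= r i <= 1) ->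
  `|Rev S v r - Rev S v' r| <= \sum_(i in S) `|v i - v' i|.
Proof.
move=> hv hv' hr; rewrite /Rev.
have /andP[hA hAB] := Rev_bound S hv hr.
have /andP[hA' hAB'] := Rev_bound S hv' hr.
have hB : 0 <= \sum_(i in S) v i by apply: sumr_ge0.
have hB' : 0 <= \sum_(i in S) v' i by apply: sumr_ge0.
set A := \sum_(i in S) r i * v i in hA hAB *.
set A' := \sum_(i in S) r i * v' i in hA' hAB' *.
set B := \sum_(i in S) v i in hB hAB *.
set B' := \sum_(i in S) v' i in hB' hAB' *.
set y := A' / (1 + B').
have hy : 0 <= y <= 1.
  by rewrite divr_ge0 ?ler_pdivrMr ?mul1r; [lra|lra|lra|lra].
have E : A / (1 + B) - A' / (1 + B') =
   \sum_(i in S) (v i - v' i) * ((r i - y) / (1 + B)).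
  rewrite (eq_bigr (fun i => (v i - v' i) * (r i - y) * (1 + B)^-1));
    last by move=> i _; rewrite mulrA.
  rewrite -mulr_suml sum_mulB.
  have -> : \sum_(i in S) r i * (v i - v' i) = A - A'.
    by rewrite /A /A' -sumrB; apply: eq_bigr => i _; ring.
  have -> : \sum_(i in S) (v i - v' i) = B - B' by rewrite sumrB.
  rewrite /y; field; lra.
rewrite E; apply: (le_trans (ler_norm_sum _ _ _)).
apply: ler_sum => i _; rewrite normrM.
apply: ler_piMr => //.
have /andP[r0 r1] := hr i.
rewrite normrM normfV (ger0_norm (x := 1 + B)); last lra.
rewrite ler_pdivrMr ?mul1r; last lra.
rewrite ler_norml; lra.
Qed.

Lemma amgm (t w x : R) : 0 < t -> 0 < w ->
  `|x| <= t / 2 * w^-1 + w * x ^+ 2 / (2 * t).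
Proof.
move=> ht hw; rewrite -subr_ge0.
have -> : t / 2 * w^-1 + w * x ^+ 2 / (2 * t) - `|x| =
   (t - w * `|x|) ^+ 2 / (2 * t * w).
  rewrite -(real_normK (num_real x)); field; apply/andP; split; lra.
by apply: divr_ge0; [exact: sqr_ge0 | nra].
Qed.

Lemma final_real (x A B : R) : 0 <= A -> 0 <= B ->
  (forall t, 0 < t -> 2 * x <= t * A + B / t) -> x <= Num.sqrt A * Num.sqrt B.
Proof.
move=> hA hB H.
have sA := sqrtr_ge0 A; have sB := sqrtr_ge0 B.
have eA := sqr_sqrtr hA; have eB := sqr_sqrtr hB.
set a := Num.sqrt A in sA eA *; set b := Num.sqrt B in sB eB *.
have [a0|a0] := eqVneq a 0.
  rewrite a0 mul0r; rewrite a0 expr0n /= in eA.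
  rewrite leNgt; apply/negP => x0.
  have := H (B / x + 1); rewrite -eA mulr0 add0r.
  have ht : 0 < B / x + 1 by rewrite ltr_pwDr ?divr_ge0 //; lra.
  rewrite ler_pdivlMr //.
  have -> : 2 * x * (B / x + 1) = 2 * B + 2 * x by field; lra.
  lra.
have [b0|b0] := eqVneq b 0.
  rewrite b0 mulr0; rewrite b0 expr0n /= in eB.
  rewrite leNgt; apply/negP => x0.
  have hA' : 0 < A by rewrite -eA exprn_gt0 // lt_def a0.
  have := H (x / A); rewrite -eB mul0r addr0 divfK ?lt0r_neq0 //.
  by move/(_ (divr_gt0 x0 hA')); lra.
have ha : 0 < a by rewrite lt_def a0.
have hb : 0 < b by rewrite lt_def b0.
have := H (b / a) (divr_gt0 hb ha).
have -> : b / a * A + B / (b / a) = 2 * (a * b).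
  by rewrite -eA -eB; field; apply/andP; split; lra.
lra.
Qed.

End alg.

Section pw.
Variable R : realType.

Lemma inv_oo_ge0 (x : R) : 0 <= x -> (0 <= inv_oo x)%E.
Proof. by move=> x0; rewrite /inv_oo; case: ifP => // _; rewrite lee_fin invr_ge0. Qed.

Lemma pw_bound (N : nat) (S : {set 'I_N}) (w dl : 'I_N -> R) (t : R) :
  0 < t -> (forall i, 0 <= w i) ->
  ((\sum_(i in S) `|dl i|)%:E <= (t/2)%:E * (\sum_(i in S) inv_oo (w i))
     + ((\sum_(i in S) w i * dl i ^+ 2) / (2 * t))%:E)%E.
Proof.
move=> ht hw.
case: (boolP [exists i in S, w i == 0]).
  move/existsP => [i /andP[iS /eqP wi0]].
  have -> : (\sum_(i in S) inv_oo (w i) = +oo)%E.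
    rewrite (bigD1 i) //= /inv_oo wi0 eqxx addye //.
    apply/negP => /eqP h.
    have : (0 <= \sum_(j in S | j != i) inv_oo (w j))%E.
      by apply: sume_ge0 => j _; apply: inv_oo_ge0.
    by rewrite /inv_oo h.
  rewrite muleC gt0_mulye ?lte_fin ?divr_gt0 // addye //.
  exact: leey.
rewrite negb_exists_in => /forallP H.
have -> : (\sum_(i in S) inv_oo (w i) = (\sum_(i in S) (w i)^-1)%:E)%E.
  rewrite -sumEFin; apply: eq_bigr => i iS.
  by rewrite /inv_oo (negbTE (implyP (H i) iS)).
rewrite -EFinM -EFinD lee_fin mulr_sumr mulr_suml -big_split /=.
apply: ler_sum => i iS; apply: amgm => //.
by rewrite lt_def (implyP (H i) iS) hw.
Qed.

Lemma wgt_sum (N : nat) (rho : {ffun {set 'I_N} -> R}) (x : 'I_N -> R) :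
  \sum_i wgt rho i * x i = \sum_S rho S * \sum_(i in S) x i.
Proof.
rewrite /wgt.
under eq_bigr do rewrite mulr_suml big_mkcond.
under [RHS]eq_bigr do rewrite mulr_sumr big_mkcond.
rewrite exchange_big /=; apply: eq_bigr => S _; apply: eq_bigr => i _.
by case: (i \in S).
Qed.

Lemma sum_sub_le (N : nat) (S : {set 'I_N}) (y : 'I_N -> R) :
  (forall i, 0 <= y i) -> \sum_(i in S) y i <= \sum_i y i.
Proof.
move=> hy; rewrite big_mkcond /=; apply: ler_sum => i _.
by case: (i \in S).
Qed.

Lemma final_key (t : R) : 0 < t -> forall x y j : R,
    (j%:E <= (t/2)%:E * x%:E + ((2*t)^-1)%:E * y%:E)%E -> 2 * j <= t * x + y / t.
Proof.
move=> ht x y j; rewrite -!EFinM -EFinD lee_fin => h.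
have e : 2 * (t / 2 * x + (2*t)^-1 * y) = t * x + y / t by field; lra.
rewrite -e; lra.
Qed.

End pw.

Section meas.
Context d (T : measurableType d) (R : realType).

Lemma msum_pred (I : finType) (P : pred I) (h : I -> T -> R) :
  (forall i, measurable_fun setT (h i)) ->
  measurable_fun setT (fun z => \sum_(i | P i) h i z).
Proof.
move=> mh; under eq_fun do rewrite big_mkcond.
apply: measurable_sum => i; case: (P i) => //; exact: measurable_cst.
Qed.

Lemma emsum_pred (I : finType) (P : pred I) (h : I -> T -> \bar R) :
  (forall i, measurable_fun setT (h i)) ->
  measurable_fun setT (fun z => \sum_(i | P i) h i z)%E.
Proof.
move=> mh; under eq_fun do rewrite big_mkcond.
apply: emeasurable_sum => i; case: (P i) => //; exact: measurable_cst.
Qed.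

Lemma minv (g : T -> R) : measurable_fun setT g -> (forall z, 0 < g z) ->
  measurable_fun setT (fun z => (g z)^-1).
Proof.
move=> mg g0.
pose F : set R := `]0, +oo[%classic.
have mF : measurable F by exact: measurable_itv.
have mi : measurable_fun F (@GRing.inv R).
  apply: subspace_continuous_measurable_fun => //.
  apply: (@continuous_in_subspaceT R R F) => x; rewrite inE /= /F /= in_itv /= andbT => x0.
  by apply: inv_continuous; rewrite gt_eqF.
apply: (measurable_comp mF _ mi mg).
by move=> _ [z _ <-]; rewrite /F /= in_itv /= andbT.
Qed.

Lemma mpick_pre (N : nat) (pi : T -> {set 'I_N})
  (mpi : forall S, measurable (pi @^-1` [set S])) (S : {set 'I_N}) :
  measurable_fun setT (fun z => S == pi z).
Proof.
apply: (measurable_fun_bool true); rewrite setTI.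
rewrite [X in measurable X](_ : _ = pi @^-1` [set S]) //.
apply/seteqP; split => z /=; first by move/eqP => <-.
by move=> ->; rewrite eqxx.
Qed.

Lemma mpick (N : nat) (pi : T -> {set 'I_N})
  (mpi : forall S, measurable (pi @^-1` [set S])) (h : {set 'I_N} -> T -> R) :
  (forall S, measurable_fun setT (h S)) ->
  measurable_fun setT (fun z => h (pi z) z).
Proof.
move=> mh.
have -> : (fun z => h (pi z) z) =
    (fun z => \sum_S (if S == pi z then h S z else 0)).
  by apply/funext => z; rewrite -big_mkcond big_pred1_eq.
apply: measurable_sum => S.
apply: measurable_fun_ifT; [exact: mpick_pre | exact: mh | exact: measurable_cst].
Qed.

Lemma empick (N : nat) (pi : T -> {set 'I_N})
  (mpi : forall S, measurable (pi @^-1` [set S])) (h : {set 'I_N} -> T -> \bar R) :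
  (forall S, measurable_fun setT (h S)) ->
  measurable_fun setT (fun z => h (pi z) z).
Proof.
move=> mh.
have -> : (fun z => h (pi z) z) =
    (fun z => \sum_S (if S == pi z then h S z else 0%E))%E.
  by apply/funext => z; rewrite -big_mkcond big_pred1_eq.
apply: emeasurable_sum => S.
apply: measurable_fun_ifT; [exact: mpick_pre | exact: mh | exact: measurable_cst].
Qed.

Lemma minv_oo (g : T -> R) : measurable_fun setT g -> (forall z, 0 <= g z) ->
  measurable_fun setT (fun z => inv_oo (g z)).
Proof.
move=> mg g0.
have mb : measurable_fun setT (fun z => g z == 0).
  by apply: measurable_fun_eqr => //; exact: measurable_cst.
pose g' z := if g z == 0 then 1 else g z.
have -> : (fun z => inv_oo (g z)) =
   (fun z => if g z == 0 then +oo%E else ((g' z)^-1)%:E).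
  by apply/funext => z; rewrite /inv_oo /g'; case: ifP.
apply: measurable_fun_ifT; [exact: mb | exact: measurable_cst |].
apply/measurable_EFinP; apply: minv.
  by apply: measurable_fun_ifT; [exact: mb | exact: measurable_cst | exact: mg].
move=> z; rewrite /g'; case: ifPn => // gz.
by rewrite lt_def gz g0.
Qed.
End meas.

End Helpers.
Import Helpers.


Theorem lemma2 (R : realType) (N K : nat) (hK : (1 <= K <= N)%N)
  (d : measure_display) (X : measurableType d)
  (D : probability (X * N.-tuple R)%type R)
  (hD : D [set z | forall i : 'I_N, 0 <= tnth z.2 i <= 1] = 1%E)
  (f fstar : X -> 'I_N -> R)
  (hf : forall x i, 0 <= f x i <= 1) (hfstar : forall x i, 0 <= fstar x i <= 1)
  (mf : forall i, measurable_fun setT (fun x => f x i))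
  (mfstar : forall i, measurable_fun setT (fun x => fstar x i))
  (q : X * N.-tuple R -> {ffun {set 'I_N} -> R})
  (hq : forall z, is_distS K (q z))
  (mq : forall S, measurable_fun setT (fun z => q z S))
  (pi : X * N.-tuple R -> {set 'I_N})
  (hpi : forall z, validS K (pi z))
  (mpi : forall S, measurable (pi @^-1` [set S]))
  (hV : (dispersion D q pi < +oo)%E) :
  `| Rintegral D setT (fun z => Rev (pi z) (f z.1) (fun i => tnth z.2 i))
     - Rintegral D setT (fun z => Rev (pi z) (fstar z.1) (fun i => tnth z.2 i)) |
  <= Num.sqrt (fine (dispersion D q pi))
     * Num.sqrt (Rintegral D setT (fun z =>
         \sum_(S : {set 'I_N}) q z S * \sum_(i in S) (f z.1 i - fstar z.1 i) ^+ 2)).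
Proof.
have mr : forall i, measurable_fun setT (fun z : X * N.-tuple R => tnth z.2 i).
  by move=> i; exact: (measurableT_comp (measurable_tnth i) measurable_snd).
have mfz : forall i, measurable_fun setT (fun z : X * N.-tuple R => f z.1 i).
  by move=> i; exact: (measurableT_comp (mf i) measurable_fst).
have mfsz : forall i, measurable_fun setT (fun z : X * N.-tuple R => fstar z.1 i).
  by move=> i; exact: (measurableT_comp (mfstar i) measurable_fst).
have mRev : forall v : X * N.-tuple R -> 'I_N -> R,
    (forall i, measurable_fun setT (fun z => v z i)) -> (forall z i, 0 <= v z i) ->
    measurable_fun setT (fun z => Rev (pi z) (v z) (fun i => tnth z.2 i)).
  move=> v mv v0.
  apply: (mpick mpi (h := fun S z => Rev S (v z) (fun i => tnth z.2 i))) => S.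
  rewrite /Rev; apply: measurable_funM.
    by apply: msum_pred => i; apply: measurable_funM; [exact: mr | exact: mv].
  apply: minv.
    by apply: measurable_funD; [exact: measurable_cst | apply: msum_pred => i; exact: mv].
  move=> z; have : 0 <= \sum_(i in S) v z i by apply: sumr_ge0.
  lra.
pose E := [set z : X * N.-tuple R | forall i : 'I_N, 0 <= tnth z.2 i <= 1].
have mE : measurable E.
  have -> : E = \bigcap_(i in [set: 'I_N])
      ((fun z : X * N.-tuple R => tnth z.2 i) @^-1` `[0, 1]%classic).
    apply/seteqP; split => z /=.
      by move=> h i _; rewrite /= in_itv /=; exact: h.
    by move=> h i; have := h i I; rewrite /= in_itv /=.
  apply: fin_bigcap_measurable; first exact: finite_finset.
  move=> i _; rewrite -[X in measurable X]setTI; apply: (mr i measurableT).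
  exact: measurable_itv.
have hDE : D E = 1%E by exact: hD.
have DnE : D (~` E) = 0%E by rewrite probability_setC // hDE subee.
have EE : [set: X * N.-tuple R] `\` ~` E = E by rewrite setDE setCK setTI.

have hE : forall z, E z -> forall i, 0 <= tnth z.2 i <= 1 by [].
have f0 : forall (z : X * N.-tuple R) i, 0 <= f z.1 i by move=> z i; have /andP[] := hf z.1 i.
have fs0 : forall (z : X * N.-tuple R) i, 0 <= fstar z.1 i by move=> z i; have /andP[] := hfstar z.1 i.
have intRev : forall v : X * N.-tuple R -> 'I_N -> R,
    (forall i, measurable_fun setT (fun z => v z i)) -> (forall z i, 0 <= v z i) ->
    D.-integrable setT (EFin \o (fun z => Rev (pi z) (v z) (fun i => tnth z.2 i))).
  move=> v mv v0; apply/integrableP; split; first by apply/measurable_EFinP; exact: mRev.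
  rewrite (@ge0_negligible_integral _ _ _ D setT (~` E)) //; first last.
  - by apply: measurableT_comp => //; apply/measurable_EFinP; exact: mRev.
  - exact: (measurableC mE).
  rewrite EE; apply: (le_lt_trans (y := (\int[D]_(z in E) (cst 1%E) z)%E)).
    apply: ge0_le_integral => //.
    - apply: (measurable_funS measurableT) => //.
      by apply: measurableT_comp => //; apply/measurable_EFinP; exact: mRev.
    move=> z Ez /=; rewrite lee_fin; apply: Rev_norm_le1 => //.
  rewrite integral_cst // mul1e; apply: (le_lt_trans (probability_le1 _ mE)); exact: ltry.

have i1 := intRev (fun z => f z.1) mfz f0.
have i2 := intRev (fun z => fstar z.1) mfsz fs0.
set g1 := (fun z => Rev (pi z) (f z.1) (fun i => tnth z.2 i)) in i1 *.
set g2 := (fun z => Rev (pi z) (fstar z.1) (fun i => tnth z.2 i)) in i2 *.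
have mg1 : measurable_fun setT g1 by exact: mRev.
have mg2 : measurable_fun setT g2 by exact: mRev.
rewrite -RintegralB //.
have iB : D.-integrable setT (EFin \o (fun z => g1 z - g2 z)).
  have -> : EFin \o (fun z => g1 z - g2 z) = (fun z => (g1 z)%:E - (g2 z)%:E)%E.
    by apply/funext => z; rewrite /= EFinB.
  exact: integrableB.
apply: (le_trans (le_normr_Rintegral _ _)) => //.
have qge0 : forall z S, 0 <= q z S by move=> z S; case: (hq z) => h _; exact: h.
have qsum : forall z, \sum_S q z S = 1 by move=> z; case: (hq z) => _ [].
have wge0 : forall z i, 0 <= wgt (q z) i.
  by move=> z i; apply: sumr_ge0 => S _; exact: qge0.
have mw : forall i, measurable_fun setT (fun z => wgt (q z) i).
  by move=> i; rewrite /wgt; apply: msum_pred => S; exact: mq.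
pose a z := (\sum_(i in pi z) inv_oo (wgt (q z) i))%E.
pose b z := \sum_(S : {set 'I_N}) q z S * \sum_(i in S) (f z.1 i - fstar z.1 i) ^+ 2.
have ma : measurable_fun setT a.
  apply: (empick mpi (h := fun S z => \sum_(i in S) inv_oo (wgt (q z) i))%E) => S.
  by apply: emsum_pred => i; apply: minv_oo; [exact: mw | move=> z; exact: wge0].
have mb : measurable_fun setT b.
  apply: msum_pred => S; apply: measurable_funM; first exact: mq.
  apply: msum_pred => i; apply: measurable_funX.
  by apply: measurable_funB; [exact: mfz | exact: mfsz].
have a0 : forall z, (0 <= a z)%E.
  by move=> z; apply: sume_ge0 => i _; apply: inv_oo_ge0.
have b0 : forall z, 0 <= b z.
  move=> z; apply: sumr_ge0 => S _; apply: mulr_ge0; first exact: qge0.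
  by apply: sumr_ge0 => i _; exact: sqr_ge0.
have bN : forall z, b z <= N%:R.
  move=> z; apply: (@le_trans _ _ (\sum_(S : {set 'I_N}) q z S * N%:R)).
    apply: ler_sum => S _; apply: ler_wpM2l; first exact: qge0.
    apply: (le_trans (sum_sub_le _ _)); first by move=> i; exact: sqr_ge0.
    have <- : \sum_(i : 'I_N) (1:R) = N%:R by rewrite sumr_const card_ord.
    apply: ler_sum => i _.
    have /andP[? ?] := hf z.1 i; have /andP[? ?] := hfstar z.1 i.
    nra.
  by rewrite -mulr_suml qsum mul1r.
pose ab t z := ((t/2)%:E * a z + ((2*t)^-1)%:E * (b z)%:E)%E.
have ab0 : forall t, 0 < t -> forall z, (0 <= ab t z)%E.
  move=> t ht z; apply: adde_ge0; apply: mule_ge0 => //.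
  - by rewrite lee_fin; lra.
  - by rewrite lee_fin invr_ge0; lra.
  - by rewrite lee_fin.
have mab : forall t, measurable_fun setT (ab t).
  move=> t; apply: emeasurable_funD; apply: measurable_funeM => //.
  exact/measurable_EFinP.
have pw : forall t, 0 < t -> forall z, E z -> ((`|g1 z - g2 z|)%:E <= ab t z)%E.
  move=> t ht z Ez.
  apply: (le_trans (y := (\sum_(i in pi z) `|f z.1 i - fstar z.1 i|)%:E)).
    rewrite lee_fin; apply: Rev_lip => //.
  apply: (le_trans (pw_bound (pi z) (fun i => f z.1 i - fstar z.1 i) ht (wge0 z))).
  apply: leeD => //; rewrite -EFinM lee_fin [X in _ <= X]mulrC.
  apply: ler_wpM2r; first by rewrite invr_ge0; lra.
  apply: (le_trans (sum_sub_le _ _)).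
    by move=> i; apply: mulr_ge0; [exact: wge0 | exact: sqr_ge0].
  by rewrite wgt_sum.

have mgB : measurable_fun setT (fun z => `|g1 z - g2 z|).
  by apply: measurableT_comp => //; apply: measurable_funB.
have Bfin : (\int[D]_z (b z)%:E < +oo)%E.
  apply: (le_lt_trans (y := (\int[D]_z (cst (N%:R)%:E) z)%E)).
    apply: ge0_le_integral => //.
    - by move=> z _; rewrite lee_fin.
    - exact/measurable_EFinP.
    - by move=> z _; rewrite lee_fin.
  rewrite integral_cst //; set m := (X in (_ * X)%E).
  have -> : m = 1%E by exact: probability_setT.
  by rewrite mule1 ltry.
have claim : forall t, 0 < t -> (\int[D]_z (`|g1 z - g2 z|)%:E <=
    (t/2)%:E * dispersion D q pi + ((2*t)^-1)%:E * \int[D]_z (b z)%:E)%E.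
  move=> t ht.
  rewrite (@ge0_negligible_integral _ _ _ D setT (~` E)) //; first last.
  - exact/measurable_EFinP.
  - exact: (measurableC mE).
  rewrite EE.
  apply: (le_trans (y := (\int[D]_(z in E) ab t z)%E)).
    apply: ge0_le_integral => //.
    - by apply: (measurable_funS measurableT) => //; exact/measurable_EFinP.
    - by apply: (measurable_funS measurableT) => //; exact: mab.
    - by move=> z Ez; exact: pw.
  apply: (le_trans (y := (\int[D]_z ab t z)%E)).
    apply: (@ge0_subset_integral _ _ _ D E setT mE measurableT) => //.
    by move=> z _; exact: ab0.
  rewrite /ab ge0_integralD //;
    try (by move=> z _; apply: mule_ge0 => //; rewrite lee_fin ?invr_ge0; lra);
    try (by apply: measurable_funeM => //; exact/measurable_EFinP).
  rewrite ge0_integralZl_EFin //; last by lra.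
  rewrite ge0_integralZl_EFin //; last by rewrite invr_ge0; lra.
  - by move=> z _; rewrite lee_fin.
  - exact/measurable_EFinP.
  move=> z _; apply: mule_ge0; last by rewrite lee_fin.
  by rewrite lee_fin invr_ge0; lra.

have A0 : (0 <= dispersion D q pi)%E by apply: integral_ge0 => z _; exact: a0.
have Afin : dispersion D q pi \is a fin_num by rewrite ge0_fin_numE.
have B0 : (0 <= \int[D]_z (b z)%:E)%E by apply: integral_ge0 => z _; rewrite lee_fin.
have Bfin' : (\int[D]_z (b z)%:E)%E \is a fin_num by rewrite ge0_fin_numE.
apply: final_real.
- exact: fine_ge0.
- by apply: Rintegral_ge0 => z _; exact: b0.
move=> t ht.
have key := final_key ht.
have J0 : (0 <= \int[D]_z (`|g1 z - g2 z|)%:E)%E by apply: integral_ge0.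
have Jfin : (\int[D]_z (`|g1 z - g2 z|)%:E)%E \is a fin_num.
  rewrite ge0_fin_numE //; apply: (le_lt_trans (claim t ht)).
  by rewrite -(fineK Afin) -(fineK Bfin') -!EFinM -EFinD ltry.
have := claim t ht.
rewrite -(fineK Afin) -(fineK Bfin') -(fineK Jfin) => h.
exact: (key _ _ _ h).
Qed.
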